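(* Let $w$ be a nonempty factor of slope $\alpha$ with minimum abelian period $m$. Let $k$ be the largest integer such that $q_k\le m$, and let $t$ be the largest integer such that $tq_k\le m$ and $1\le t\le a_{k+1}$. If $m\notin\mathcal{M}_\alpha$, then $$(q_{k+1}+2t-1)q_k-q_{k+1}\le |w| \quad\text{and}\quad (q_{k+1}+2t-1)q_k-q_{k+1}\le (\mathrm{ab}_\alpha(m)+2)m-2.$$
   Context: $\alpha\in(0,1)$ is irrational with $\alpha=[0;a_1,a_2,\ldots]$, $a_i$ positive integers, and $a_1\ge2$. $q_{-1}=0$, $q_0=1$, $q_1=a_1$, $q_k=a_kq_{k-1}+q_{k-2}$ ($k\ge2$). $\mathcal{M}_\alpha=\{tq_k: k\ge0,\ 1\le t\le a_{k+1}\}$. $\|x\|$ is the distance from $x$ to the nearest integer. Sturmian words: identify the circle $\mathbb{T}$ with $[0,1)$, $R(\rho)=\{\rho+\alpha\}$, with either $I_0=[0,1-\alpha)$, $I_1=[1-\alpha,1)$ or $I_0=(0,1-\alpha]$, $I_1=(1-\alpha,1]$; $\mathbf{s}_{\rho,\alpha}$ has $n$-th letter $0$ if $R^n(\rho)\in I_0$ and $1$ otherwise; all such words share the set $\mathcal{L}_\alpha$ of finite factors (factors of slope $\alpha$). Parikh vector of a binary word $u$: $(|u|_0,|u|_1)$; $P$ is contained in $Q$ if $P\le Q$ componentwise and $P\neq Q$. An abelian decomposition of $w$ is $w=u_0u_1\cdots u_{n-1}u_n$, $n\ge2$, with $u_1,\ldots,u_{n-1}$ of common Parikh vector $P$ and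 the Parikh vectors of $u_0,u_n$ contained in $P$; the common length of $u_1,\ldots,u_{n-1}$ is an abelian period of $w$, and the minimum abelian period is the least one. An abelian power of period $m$ and exponent $e$ is a concatenation of $e$ pairwise abelian equivalent words of length $m$; $\mathrm{ab}_\alpha(m)$ is the maximum exponent of an abelian power of period $m$ in $\mathcal{L}_\alpha$ (it is known that $\mathrm{ab}_\alpha(m)=\lfloor 1/\|m\alpha\|\rfloor$). *)

(* Defs.v *)
(* concrete reals R, words as lists of bool (false = letter 0, true = letter 1). *)
From Stdlib Require Import Reals ZArith List.
Open Scope R_scope.

Definition irrational (x : R) : Prop :=
  forall (p : Z) (q : nat), (0 < q)%nat -> x <> IZR p / INR q.

(** Gauss map x |-> {1/x}; continued fraction digits a_k = floor(1 / G^{k-1}(alpha)), k >= 1. *)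
Definition gauss (x : R) : R := frac_part (/ x).

Definition cf_digit (alpha : R) (k : nat) : nat :=
  match k with
  | O => O
  | S j => Z.to_nat (Int_part (/ (Nat.iter j gauss alpha)))
  end.

(** qpair n = (q_{n-1}, q_n), with q_{-1} = 0, q_0 = 1, q_k = a_k q_{k-1} + q_{k-2}. *)
Fixpoint qpair (alpha : R) (n : nat) : nat * nat :=
  match n with
  | O => (0%nat, 1%nat)
  | S j => let (p, c) := qpair alpha j in (c, (cf_digit alpha (S j) * c + p)%nat)
  end.

Definition cf_q (alpha : R) (n : nat) : nat := snd (qpair alpha n).

Definition in_M (alpha : R) (m : nat) : Prop :=
  exists k t : nat, (1 <= t)%nat /\ (t <= cf_digit alpha (S k))%nat /\ m = (t * cf_q alpha k)%nat.

(** Convention c = false : I_0 = [0, 1-alpha), I_1 = [1-alpha, 1).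
    Convention c = true  : I_0 = (0, 1-alpha], I_1 = (1-alpha, 1] (the point 0 = 1 lies in I_1). *)
Definition sletter (c : bool) (alpha x : R) : bool :=
  if c then
    (if Rlt_dec 0 (frac_part x) then
       (if Rle_dec (frac_part x) (1 - alpha) then false else true)
     else true)
  else
    (if Rlt_dec (frac_part x) (1 - alpha) then false else true).

Definition sturmian (c : bool) (alpha rho : R) (n : nat) : bool :=
  sletter c alpha (rho + INR n * alpha).

Definition factor_of_slope (alpha : R) (w : list bool) : Prop :=
  exists (rho : R) (c : bool) (n : nat), 0 <= rho < 1 /\
    forall i : nat, (i < length w)%nat -> nth i w false = sturmian c alpha rho (n + i).

Definition count_letter (b : bool) (u : list bool) : nat :=
  length (filter (fun x => Bool.eqb x b) u).

Definition parikh (u : list bool) : nat * nat := (count_letter false u, count_letter true u).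

Definition parikh_contained (P Q : nat * nat) : Prop :=
  (fst P <= fst Q)%nat /\ (snd P <= snd Q)%nat /\ P <> Q.

Definition abelian_period (w : list bool) (m : nat) : Prop :=
  exists (u0 un : list bool) (mids : list (list bool)) (P : nat * nat),
    w = u0 ++ concat mids ++ un /\ mids <> nil /\
    (forall u, In u mids -> parikh u = P /\ length u = m) /\
    parikh_contained (parikh u0) P /\ parikh_contained (parikh un) P.

Definition min_abelian_period (w : list bool) (m : nat) : Prop :=
  abelian_period w m /\ forall m', abelian_period w m' -> (m <= m')%nat.

Definition abelian_power (v : list bool) (m e : nat) : Prop :=
  exists blocks : list (list bool),
    v = concat blocks /\ length blocks = e /\
    (forall u, In u blocks -> length u = m) /\
    (forall u u', In u blocks -> In u' blocks -> parikh u = parikh u').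

Definition is_ab (alpha : R) (m E : nat) : Prop :=
  (exists v, factor_of_slope alpha v /\ abelian_power v m E) /\
  (forall v e, factor_of_slope alpha v -> abelian_power v m e -> (e <= E)%nat).

(* Main.v *)
Require Import Defs.
From Stdlib Require Import Reals ZArith List.
From Stdlib Require Import Arith Lia Lra Psatz Bool Classical.
Open Scope nat_scope.

Lemma count_letter_app b u v : count_letter b (u ++ v) = count_letter b u + count_letter b v.
Proof. unfold count_letter. rewrite filter_app, length_app. auto. Qed.

Lemma count_ft u : count_letter false u + count_letter true u = length u.
Proof. induction u as [|a u IH]; simpl; auto. unfold count_letter in *. destruct a; simpl; lia. Qed.

Definition blk (x : nat -> bool) j L := map x (seq j L).
Definition ones x j L := count_letter true (blk x j L).

Lemma blk_split x j a b : blk x j (a + b) = blk x j a ++ blk x (j + a) b.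
Proof. unfold blk. rewrite seq_app, map_app. auto. Qed.

Lemma blk_len x j L : length (blk x j L) = L.
Proof. unfold blk. rewrite length_map, length_seq. auto. Qed.

Lemma ones_split x j a b : ones x j (a + b) = ones x j a + ones x (j + a) b.
Proof. unfold ones. rewrite blk_split, count_letter_app. auto. Qed.

Lemma ones_le x j L : ones x j L <= L.
Proof. unfold ones. pose proof (count_ft (blk x j L)). rewrite blk_len in H. lia. Qed.

Lemma ones_one x j : ones x j 1 = if x j then 1 else 0.
Proof. unfold ones, blk, count_letter. simpl. destruct (x j); auto. Qed.

Lemma ones_at x j L i : j <= i < j + L ->
  ones x j L = ones x j (i - j) + (if x i then 1 else 0) + ones x (S i) (j + L - S i).
Proof.
  intros H. replace L with ((i - j) + (1 + (j + L - S i))) at 1 by lia.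
  rewrite ones_split, ones_split. replace (j + (i - j)) with i by lia.
  rewrite ones_one. replace (i + 1) with (S i) by lia. lia.
Qed.

Lemma parikh_blk x j L : parikh (blk x j L) = (L - ones x j L, ones x j L).
Proof.
  unfold parikh, ones. f_equal. pose proof (count_ft (blk x j L)). rewrite blk_len in H. lia.
Qed.

Section Assemble.
Variable x : nat -> bool.
Variable p cM : nat.

Definition MM j :=
  ones x j p = cM \/ (ones x j p = S cM /\ x j = true /\ x (j + p - 1) = true) \/
  (S (ones x j p) = cM /\ x j = false /\ x (j + p - 1) = false).

Lemma suffix_ok j r : 1 <= p -> r < p -> MM j -> ones x (j + (p - r)) r <= cM /\ r - ones x (j + (p - r)) r <= p - cM.
Proof.
  intros Hp Hr HM.
  assert (Hs : ones x j p = ones x j (p - r) + ones x (j + (p - r)) r).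
  { rewrite <- ones_split. f_equal. lia. }
  pose proof (ones_le x j (p - r)). pose proof (ones_le x (j + (p - r)) r).
  pose proof (ones_at x j (p - r) j ltac:(lia)) as Hj.
  rewrite Nat.sub_diag in Hj. change (ones x j 0) with 0 in Hj.
  destruct HM as [HM|[[HM [G1 G2]]|[HM [G1 G2]]]].
  - lia.
  - rewrite G1 in Hj. lia.
  - rewrite G1 in Hj. pose proof (ones_le x (S j) (j + (p - r) - S j)). lia.
Qed.

Lemma prefix_ok j s : 1 <= p -> s < p -> MM j -> ones x j s <= cM /\ s - ones x j s <= p - cM.
Proof.
  intros Hp Hr HM.
  assert (Hs : ones x j p = ones x j s + ones x (j + s) (p - s)).
  { rewrite <- ones_split. f_equal. lia. }
  pose proof (ones_le x j s). pose proof (ones_le x (j + s) (p - s)).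
  pose proof (ones_at x (j + s) (p - s) (j + p - 1) ltac:(lia)) as Hj.
  pose proof (ones_le x (j + s) (j + p - 1 - (j + s))).
  pose proof (ones_le x (S (j + p - 1)) (j + s + (p - s) - S (j + p - 1))).
  destruct HM as [HM|[[HM [G1 G2]]|[HM [G1 G2]]]].
  - lia.
  - rewrite G2 in Hj. lia.
  - rewrite G2 in Hj. lia.
Qed.

Lemma concat_blocks j e :
  concat (map (fun i => blk x (j + i * p) p) (seq 0 e)) = blk x j (e * p).
Proof.
  revert j. induction e as [|e IH]; intros j; simpl; auto.
  rewrite <- seq_shift, map_map.
  replace (p + e * p) with (p + e * p) by lia.
  rewrite blk_split. f_equal.
  - f_equal; lia.
  - rewrite <- (IH (j + p)). f_equal. apply map_ext. intros i. f_equal. lia.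
Qed.

Lemma assemble n r : 1 <= p -> r < p -> r + p <= n ->
  (forall i, r + i * p + p <= n -> ones x (p + r + i * p) p = cM) ->
  MM r -> MM (p + r + ((n - r) / p) * p) ->
  abelian_period (blk x p n) p.
Proof.
  intros Hp Hr Hrn Hmaj HM0 HM1.
  set (e := (n - r) / p).
  pose proof (Nat.div_mod (n - r) p ltac:(lia)) as Hd.
  pose proof (Nat.mod_upper_bound (n - r) p ltac:(lia)) as Hm.
  fold e in Hd, HM1.
  remember ((n - r) mod p) as s.
  assert (He : 1 <= e).
  { destruct e; [|lia]. lia. }
  assert (HcM : cM <= p).
  { pose proof (Hmaj 0 ltac:(lia)). pose proof (ones_le x (p + r + 0 * p) p). lia. }
  exists (blk x p r), (blk x (p + r + e * p) s),
    (map (fun i => blk x (p + r + i * p) p) (seq 0 e)), (p - cM, cM).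
  split; [|split; [|split; [|split]]].
  - rewrite concat_blocks.
    replace n with (r + (e * p + s)) at 1 by lia.
    rewrite !blk_split. reflexivity.
  - destruct e; [lia|]. simpl. discriminate.
  - intros u Hu. apply in_map_iff in Hu. destruct Hu as [i [<- Hi]].
    apply in_seq in Hi. rewrite parikh_blk, blk_len. rewrite Hmaj by nia. auto.
  - rewrite parikh_blk. unfold parikh_contained; simpl.
    pose proof (suffix_ok r r Hp Hr HM0) as [A B].
    replace (r + (p - r)) with p in A, B by lia.
    pose proof (ones_le x p r).
    split; [lia|split; [lia|]]. intro Heq. injection Heq. lia.
  - rewrite parikh_blk. unfold parikh_contained; simpl.
    pose proof (prefix_ok (p + r + e * p) s Hp Hm HM1) as [A B].
    pose proof (ones_le x (p + r + e * p) s).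
    split; [lia|split; [lia|]]. intro Heq. injection Heq. lia.
Qed.
End Assemble.

Open Scope nat_scope.

Fixpoint cnt (P : nat -> bool) (u W : nat) : nat :=
  match W with O => O | S W' => (if P u then 1 else 0) + cnt P (S u) W' end.

Lemma cnt_split P a : forall u b, cnt P u (a + b) = cnt P u a + cnt P (u + a) b.
Proof.
  induction a as [|a IH]; intros u b; simpl.
  - now rewrite Nat.add_0_r.
  - rewrite IH. replace (S u + a) with (u + S a) by lia. lia.
Qed.

Lemma cnt_le P W : forall u, cnt P u W <= W.
Proof. induction W; intros u; simpl; [lia|]. specialize (IHW (S u)); destruct (P u); lia. Qed.

Lemma cnt_zero P W : forall u, (forall j, u <= j < u + W -> P j = false) -> cnt P u W = 0.
Proof.
  induction W; intros u H; simpl; [lia|].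
  rewrite (H u) by lia. rewrite IHW; [lia|]. intros j Hj; apply H; lia.
Qed.

Lemma cnt_pos P W : forall u j, u <= j < u + W -> P j = true -> 1 <= cnt P u W.
Proof.
  induction W; intros u j Hj HP; simpl; [lia|].
  destruct (Nat.eq_dec j u) as [->|Hne].
  - rewrite HP; lia.
  - specialize (IHW (S u) j ltac:(lia) HP). destruct (P u); lia.
Qed.

Lemma cnt_S P u W : cnt P u (S W) = cnt P u W + (if P (u + W) then 1 else 0).
Proof.
  replace (S W) with (W + 1) by lia. rewrite cnt_split. simpl. lia.
Qed.

Section Sep.
Variable P : nat -> bool.
Variable Q : nat.
Hypothesis HQ : 1 <= Q.
Hypothesis sep : forall j j', P j = true -> P j' = true -> j < j' -> j + Q <= j'.

Lemma cnt_sep : forall W u c, W <= c * Q -> cnt P u W <= c.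
Proof.
  intro W. induction W as [W IH] using (well_founded_induction lt_wf).
  intros u c HW. destruct W as [|W']; simpl; [lia|].
  destruct (P u) eqn:Pu.
  - destruct c as [|c]; [lia|].
    destruct (le_lt_dec W' (Q - 1)) as [Hs|Hs].
    + rewrite cnt_zero; [lia|]. intros j Hj. destruct (P j) eqn:Pj; auto.
      specialize (sep u j Pu Pj ltac:(lia)). lia.
    + replace W' with ((Q - 1) + (W' - (Q - 1))) by lia.
      rewrite cnt_split. rewrite cnt_zero.
      * assert (cnt P (S u + (Q - 1)) (W' - (Q - 1)) <= c).
        { apply IH; lia. }
        lia.
      * intros j Hj. destruct (P j) eqn:Pj; auto.
        specialize (sep u j Pu Pj ltac:(lia)). lia.
  - apply IH; lia.
Qed.

Lemma slide (q t L : nat) : 1 <= q -> 1 <= t -> t * q <= Q ->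
  L <= (q - 1) * Q + (t - 1) * q ->
  (forall s, s < t -> q <= cnt P (s * q) L) -> False.
Proof.
  intros Hq Ht HtQ HL Hall.
  destruct (classic (exists g, g < (t - 1) * q /\ P g = true)) as [[g [Hg Pg]]|Hno].
  - pose proof (Nat.div_mod g q ltac:(lia)) as Hd. pose proof (Nat.mod_upper_bound g q ltac:(lia)) as Hm.
    remember (g / q) as i. remember (g mod q) as md.
    assert (Hi : i * q <= g < (i + 1) * q) by nia.
    assert (Hit : i + 1 < t) by nia.
    specialize (Hall (i + 1) Hit).
    assert (Hc : cnt P g (((i + 1) * q - g) + L) <= q).
    { apply cnt_sep. nia. }
    rewrite cnt_split in Hc.
    replace (g + ((i + 1) * q - g)) with ((i + 1) * q) in Hc by nia.
    assert (1 <= cnt P g ((i + 1) * q - g)).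
    { apply (cnt_pos P _ g g); [lia|exact Pg]. }
    lia.
  - specialize (Hall 0 ltac:(lia)). simpl in Hall.
    assert (HL2 : L = (t - 1) * q + (L - (t - 1) * q) \/ L < (t - 1) * q) by lia.
    destruct HL2 as [HL2|HL2].
    + rewrite HL2 in Hall. rewrite cnt_split in Hall. rewrite cnt_zero in Hall.
      * simpl in Hall.
        assert (cnt P ((t - 1) * q) (L - (t - 1) * q) <= q - 1).
        { apply cnt_sep. nia. }
        lia.
      * intros j Hj. destruct (P j) eqn:Pj; auto. exfalso. apply Hno. exists j. split; [lia|auto].
    + rewrite cnt_zero in Hall; [lia|].
      intros j Hj. destruct (P j) eqn:Pj; auto. exfalso. apply Hno. exists j. split; [lia|auto].
Qed.
End Sep.

Fixpoint sumN (f : nat -> nat) (n : nat) : nat :=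
  match n with O => O | S n' => sumN f n' + f n' end.

Lemma sumN_add f g n : sumN (fun i => f i + g i) n = sumN f n + sumN g n.
Proof. induction n; simpl; lia. Qed.

Lemma sumN_ge f n i : i < n -> f i <= sumN f n.
Proof. induction n; simpl; intros; [lia|]. destruct (Nat.eq_dec i n); subst; [lia|]. specialize (IHn ltac:(lia)); lia. Qed.

Lemma sumN_le f g n : (forall i, i < n -> f i <= g i) -> sumN f n <= sumN g n.
Proof. induction n; simpl; intros H; [lia|]. specialize (IHn ltac:(auto)). specialize (H n ltac:(lia)). lia. Qed.

Lemma sumN_strict f g n i : (forall i, i < n -> f i <= g i) -> i < n -> f i < g i -> sumN f n < sumN g n.
Proof.
  induction n; simpl; intros H Hi Hlt; [lia|].
  destruct (Nat.eq_dec i n); subst.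
  - pose proof (sumN_le f g n ltac:(auto)). lia.
  - specialize (IHn ltac:(auto) ltac:(lia) Hlt). specialize (H n ltac:(lia)). lia.
Qed.

Lemma sumN_const c n : sumN (fun _ => c) n = n * c.
Proof. induction n; simpl; lia. Qed.

Lemma mp_bound (Mp Mq : nat -> bool) (q t : nat) :
  (forall j, Mp j = true -> exists s, s < t /\ Mq (j + s * q) = true) ->
  forall L, cnt Mp 0 L <= sumN (fun s => cnt Mq (s * q) L) t.
Proof.
  intros R1 L. induction L.
  - simpl. induction t; simpl; lia.
  - rewrite cnt_S.
    assert (E : sumN (fun s => cnt Mq (s * q) (S L)) t =
                sumN (fun s => cnt Mq (s * q) L) t + sumN (fun s => if Mq (s * q + L) then 1 else 0) t).
    { rewrite <- sumN_add. clear. induction t; cbn [sumN]; auto. rewrite IHt, cnt_S. lia. }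
    rewrite E. simpl.
    destruct (Mp L) eqn:HM; [|lia].
    destruct (R1 L HM) as [s [Hs Hq]].
    pose proof (sumN_ge (fun s => if Mq (s * q + L) then 1 else 0) t s Hs). simpl in H.
    replace (s * q + L) with (L + s * q) in H by lia. rewrite Hq in H. lia.
Qed.

Fixpoint countr (f : nat -> bool) (n : nat) : nat :=
  match n with O => O | S n' => countr f n' + (if f n' then 1 else 0) end.

Lemma countr_or f g n : countr (fun r => f r || g r) n <= countr f n + countr g n.
Proof. induction n; simpl; [lia|]. destruct (f n), (g n); simpl; lia. Qed.

Lemma countr_eq1 c b n : countr (fun r => (r =? c) && b) n <= 1.
Proof.
  induction n; simpl; [lia|].
  destruct (Nat.eqb_spec n c); simpl; [|destruct b; lia].
  subst. assert (countr (fun r => (r =? c) && b) c = 0).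
  { clear IHn. assert (forall m, m <= c -> countr (fun r => (r =? c) && b) m = 0).
    { induction m; simpl; intros; auto. rewrite IHm by lia.
      destruct (Nat.eqb_spec m c); [lia|]; simpl; lia. }
    apply H; lia. }
  destruct b; lia.
Qed.

Lemma countr_ext f g n : (forall r, r < n -> f r = g r) -> countr f n = countr g n.
Proof. induction n; simpl; intros H; auto. rewrite IHn by auto. rewrite H by lia. auto. Qed.

Lemma countr_all f n : (forall r, r < n -> f r = true) -> countr f n = n.
Proof. induction n; simpl; intros H; auto. rewrite IHn by auto. rewrite H by lia. lia. Qed.

Definition killed (Mp : nat -> bool) (p L r : nat) : bool :=
  existsb (fun j => (j mod p =? r) && Mp j) (seq 0 L).

Lemma killed_bound Mp p L : countr (killed Mp p L) p <= cnt Mp 0 L.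
Proof.
  induction L.
  - unfold killed; simpl.
    assert (countr (fun _ : nat => false) p = 0). { clear. induction p; simpl; lia. }
    lia.
  - rewrite cnt_S. simpl.
    rewrite (countr_ext _ (fun r => killed Mp p L r || ((r =? L mod p) && Mp L))).
    + pose proof (countr_or (killed Mp p L) (fun r => (r =? L mod p) && Mp L) p).
      pose proof (countr_eq1 (L mod p) (Mp L) p).
      destruct (Mp L).
      * lia.
      * assert (countr (fun r => (r =? L mod p) && false) p = 0).
        { clear. generalize (L mod p) as c; intro c. induction p; simpl; auto. rewrite andb_false_r. lia. }
        lia.
    + intros r Hr. unfold killed. rewrite seq_S, existsb_app. simpl.
      rewrite orb_false_r. f_equal.
      destruct (Nat.eqb_spec (L mod p) r), (Nat.eqb_spec r (L mod p)); auto; lia.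
Qed.

Lemma pigeon (Mp : nat -> bool) (p L : nat) : 1 <= p ->
  cnt Mp 0 L < p ->
  exists r, r < p /\ forall i, r + i * p < L -> Mp (r + i * p) = false.
Proof.
  intros Hp Hc.
  apply NNPP. intro Hn.
  assert (Hall : forall r, r < p -> killed Mp p L r = true).
  { intros r Hr. apply NNPP. intro Hk. apply Hn. exists r. split; auto.
    intros i Hi. destruct (Mp (r + i * p)) eqn:E; auto. exfalso. apply Hk.
    unfold killed. apply existsb_exists. exists (r + i * p). split.
    - apply in_seq. lia.
    - rewrite E. rewrite Nat.Div0.mod_add, Nat.mod_small by lia.
      rewrite Nat.eqb_refl. auto. }
  pose proof (killed_bound Mp p L). rewrite countr_all in H by auto. lia.
Qed.

Lemma choose_r (Mp Mq : nat -> bool) (q t Q L : nat) :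
  1 <= q -> 1 <= t -> t * q <= Q ->
  (forall j j', Mq j = true -> Mq j' = true -> j < j' -> j + Q <= j') ->
  (forall j, Mp j = true -> exists s, s < t /\ Mq (j + s * q) = true) ->
  L <= (q - 1) * Q + (t - 1) * q ->
  exists r, r < t * q /\ forall i, r + i * (t * q) < L -> Mp (r + i * (t * q)) = false.
Proof.
  intros Hq Ht HtQ sep R1 HL.
  apply pigeon; [nia|].
  pose proof (mp_bound Mp Mq q t R1 L) as Hb.
  assert (Hle : forall s, s < t -> cnt Mq (s * q) L <= q).
  { intros s Hs. apply (cnt_sep Mq Q); [nia|auto|nia]. }
  assert (Hex : exists s, s < t /\ cnt Mq (s * q) L < q).
  { apply NNPP. intro Hn. apply (slide Mq Q ltac:(nia) sep q t L); auto.
    intros s Hs. destruct (le_lt_dec q (cnt Mq (s * q) L)); auto.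
    exfalso. apply Hn. exists s. auto. }
  destruct Hex as [s [Hs Hlt]].
  pose proof (sumN_strict (fun s => cnt Mq (s * q) L) (fun _ => q) t s Hle Hs Hlt).
  rewrite sumN_const in H. lia.
Qed.

Open Scope R_scope.

Lemma Int_part_eq (v : R) (z : Z) : IZR z <= v < IZR z + 1 -> Int_part v = z.
Proof. intros [H1 H2]. symmetry. apply Int_part_spec. lra. Qed.

Lemma Int_part_shift (z : Z) (v : R) : Int_part (IZR z + v) = (z + Int_part v)%Z.
Proof.
  apply Int_part_eq. destruct (base_Int_part v) as [A B].
  rewrite plus_IZR. lra.
Qed.

Lemma frac_of (z : Z) (u : R) : 0 <= u < 1 -> frac_part (IZR z + u) = u.
Proof.
  intros H. unfold frac_part. rewrite Int_part_shift.
  rewrite (Int_part_eq u 0) by (simpl; lra). rewrite Z.add_0_r. ring.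
Qed.

Section Rot.
Variables alpha beta : R.
Hypothesis Ha0 : 0 < alpha.
Hypothesis Ha2 : alpha < 1/2.

Definition F (j : nat) : Z := Int_part (beta + INR j * alpha).
Definition y (j : nat) : R := beta + INR j * alpha - IZR (F j).
Definition xw (j : nat) : bool := sletter false alpha (beta + INR j * alpha).

Lemma y_bounds j : 0 <= y j < 1.
Proof. unfold y, F. destruct (base_Int_part (beta + INR j * alpha)). lra. Qed.

Lemma F_add j d : F (j + d) = (F j + Int_part (y j + INR d * alpha))%Z.
Proof.
  unfold F at 1. rewrite <- Int_part_shift. f_equal. unfold y. rewrite plus_INR. ring.
Qed.

Lemma xw_y j : xw j = if Rlt_dec (y j) (1 - alpha) then false else true.
Proof. reflexivity. Qed.

Lemma xw_at j z u : beta + INR j * alpha = IZR z + u -> 0 <= u < 1 ->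
  xw j = if Rlt_dec u (1 - alpha) then false else true.
Proof.
  intros E H. unfold xw, sletter. rewrite E, frac_of by auto. reflexivity.
Qed.

Lemma F_step j : (F (j + 1) - F j)%Z = if xw j then 1%Z else 0%Z.
Proof.
  rewrite F_add. simpl (INR 1). rewrite Rmult_1_l. rewrite xw_y.
  pose proof (y_bounds j).
  destruct (Rlt_dec (y j) (1 - alpha)).
  - rewrite (Int_part_eq _ 0) by (simpl; lra). lia.
  - rewrite (Int_part_eq _ 1) by (simpl; lra). lia.
Qed.

Lemma ones_F j L : Z.of_nat (ones xw j L) = (F (j + L) - F j)%Z.
Proof.
  induction L.
  - rewrite Nat.add_0_r. change (ones xw j 0) with 0%nat. lia.
  - replace (S L) with (L + 1)%nat by lia. rewrite ones_split, Nat2Z.inj_add, IHL, ones_one.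
    pose proof (F_step (j + L)). replace (j + (L + 1))%nat with (j + L + 1)%nat by lia.
    destruct (xw (j + L)); simpl; lia.
Qed.

Definition Mb (lam : R) (j : nat) : bool := negb (Z.eqb (Int_part (y j + lam)) 0).

Lemma Mb_true lam j : Rabs lam < 1 -> Mb lam j = true ->
  (0 < lam /\ 1 - lam <= y j) \/ (lam < 0 /\ y j < - lam).
Proof.
  intros Hl H. unfold Mb in H. pose proof (y_bounds j).
  destruct (Z.eqb_spec (Int_part (y j + lam)) 0); [discriminate|].
  apply Rabs_def2 in Hl.
  destruct (Rlt_dec (y j + lam) 0).
  - right. split; lra.
  - destruct (Rlt_dec (y j + lam) 1).
    + exfalso. apply n. apply Int_part_eq. simpl. lra.
    + left. split; lra.
Qed.

Lemma Mb_close lam j j' : Rabs lam < 1 -> Mb lam j = true -> Mb lam j' = true ->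
  Rabs (y j' - y j) < Rabs lam.
Proof.
  intros Hl H1 H2. pose proof (y_bounds j). pose proof (y_bounds j').
  destruct (Mb_true lam j Hl H1) as [[A B]|[A B]];
  destruct (Mb_true lam j' Hl H2) as [[C D]|[C D]]; try lra.
  - rewrite (Rabs_right lam) by lra. apply Rabs_def1; lra.
  - rewrite (Rabs_left lam) by lra. apply Rabs_def1; lra.
Qed.

Lemma y_diff j d : y (j + d) - y j = INR d * alpha - IZR (F (j + d) - F j).
Proof. unfold y. rewrite minus_IZR, plus_INR. ring. Qed.

Lemma Mb_consec lam j : Rabs lam < alpha -> Mb lam j = true -> Mb lam (j + 1) = true -> False.
Proof.
  intros Hl H1 H2.
  assert (Rabs lam < 1) by lra.
  pose proof (Mb_close lam j (j + 1) H H1 H2).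
  rewrite y_diff, F_step in H0. simpl (INR 1) in H0.
  destruct (xw j); simpl IZR in H0.
  - rewrite Rabs_left in H0 by lra. lra.
  - rewrite Rabs_right in H0 by lra. lra.
Qed.

Variables (q pk t Q : nat) (theta : R).
Hypothesis Hq : (1 <= q)%nat.
Hypothesis Ht : (1 <= t)%nat.
Hypothesis HtQ : (t * q < Q)%nat.
Hypothesis Hth : INR q * alpha = INR pk + theta.
Hypothesis Hth0 : theta <> 0.
Hypothesis Htth : INR t * Rabs theta < alpha.
Hypothesis BA : forall (d : nat) (P : Z), (0 < d < Q)%nat -> Rabs theta <= Rabs (INR d * alpha - IZR P).

Let p := (t * q)%nat.
Let cM := (t * pk)%nat.

Lemma Rabs_theta_small : Rabs theta < alpha.
Proof.
  assert (1 <= INR t) by (apply (le_INR 1); lia).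
  pose proof (Rabs_pos theta). nra.
Qed.

Lemma Rabs_ttheta : Rabs (INR t * theta) = INR t * Rabs theta.
Proof. rewrite Rabs_mult, Rabs_right; auto. apply Rle_ge, pos_INR. Qed.

Definition Mq j := Mb theta j.
Definition Mp j := Mb (INR t * theta) j.

Lemma F_q j : (F (j + q) - F j)%Z = (Z.of_nat pk + Int_part (y j + theta))%Z.
Proof.
  rewrite F_add, Hth.
  replace (y j + (INR pk + theta)) with (IZR (Z.of_nat pk) + (y j + theta)) by (rewrite <- INR_IZR_INZ; ring).
  rewrite Int_part_shift. lia.
Qed.

Lemma F_p j : (F (j + p) - F j)%Z = (Z.of_nat cM + Int_part (y j + INR t * theta))%Z.
Proof.
  rewrite F_add. unfold p, cM. rewrite mult_INR, Rmult_assoc, Hth.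
  replace (y j + INR t * (INR pk + theta)) with (IZR (Z.of_nat (t * pk)) + (y j + INR t * theta))
    by (rewrite <- INR_IZR_INZ, mult_INR; ring).
  rewrite Int_part_shift. lia.
Qed.

Lemma R1 j : Mp j = true -> exists s, (s < t)%nat /\ Mq (j + s * q) = true.
Proof.
  intros H. apply NNPP. intro Hn.
  assert (Hall : forall s, (s <= t)%nat -> (F (j + s * q) - F j = Z.of_nat s * Z.of_nat pk)%Z).
  { induction s; intros Hs.
    - rewrite Nat.mul_0_l, Nat.add_0_r. lia.
    - specialize (IHs ltac:(lia)).
      assert (Mq (j + s * q) = false).
      { destruct (Mq (j + s * q)) eqn:E; auto. exfalso. apply Hn. exists s. split; auto; lia. }
      pose proof (F_q (j + s * q)).
      unfold Mq, Mb in H0. destruct (Z.eqb_spec (Int_part (y (j + s * q) + theta)) 0); [|discriminate].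
      replace (j + S s * q)%nat with (j + s * q + q)%nat by lia. lia. }
  specialize (Hall t (le_n t)). pose proof (F_p j).
  unfold Mp, Mb in H. destruct (Z.eqb_spec (Int_part (y j + INR t * theta)) 0); [discriminate|].
  unfold p, cM in *. rewrite Nat2Z.inj_mul in H0. lia.
Qed.

Lemma sepq j j' : Mq j = true -> Mq j' = true -> (j < j')%nat -> (j + Q <= j')%nat.
Proof.
  intros H1 H2 Hlt.
  pose proof Rabs_theta_small.
  pose proof (Mb_close theta j j' ltac:(lra) H1 H2) as Hc.
  destruct (le_lt_dec Q (j' - j)) as [Hd|Hd]; [lia|].
  exfalso.
  replace j' with (j + (j' - j))%nat in Hc by lia.
  rewrite y_diff in Hc.
  pose proof (BA (j' - j) (F (j + (j' - j)) - F j) ltac:(lia)). lra.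
Qed.

Lemma notMp_maj j : Mp j = false -> ones xw j p = cM.
Proof.
  intros H. unfold Mp, Mb in H. pose proof (ones_F j p). rewrite F_p in H0.
  destruct (Z.eqb_spec (Int_part (y j + INR t * theta)) 0); [|discriminate]. lia.
Qed.

Lemma all_MM j : MM xw p cM j.
Proof.
  unfold MM. pose proof (ones_F j p) as Ho. rewrite F_p in Ho.
  pose proof (y_bounds j) as Hy.
  pose proof Rabs_ttheta as Hrt.
  assert (Hpq : (1 <= p)%nat) by (unfold p; nia).
  assert (HtI : 1 <= INR t) by (apply (le_INR 1); lia).
  assert (Hsm : Rabs (INR t * theta) < alpha) by lra.
  apply Rabs_def2 in Hsm.
  assert (Elast : beta + INR (j + p - 1) * alpha =
     IZR (F j + Z.of_nat cM) + (y j + INR t * theta - alpha)).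
  { rewrite plus_IZR, <- INR_IZR_INZ. unfold y, cM, p.
    replace (j + t * q - 1)%nat with (j + t * q - 1)%nat by lia.
    rewrite minus_INR by nia. rewrite plus_INR, !mult_INR. simpl (INR 1).
    replace ((INR j + INR t * INR q - 1) * alpha) with (INR j * alpha + INR t * (INR q * alpha) - alpha) by ring.
    rewrite Hth. ring. }
  destruct (Rlt_dec (y j + INR t * theta) 0) as [Hn|Hn].
  -
    rewrite (Int_part_eq _ (-1)) in Ho by (simpl; lra).
    right; right. split; [lia|split].
    + rewrite xw_y. destruct (Rlt_dec (y j) (1 - alpha)); auto. lra.
    + rewrite (xw_at _ (F j + Z.of_nat cM - 1) (y j + INR t * theta - alpha + 1)).
      * destruct (Rlt_dec _ _); auto. lra.
      * rewrite Elast, !minus_IZR, plus_IZR. simpl. ring.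
      * lra.
  - destruct (Rlt_dec (y j + INR t * theta) 1) as [Hm|Hm].
    + left. rewrite (Int_part_eq _ 0) in Ho by (simpl; lra). lia.
    + rewrite (Int_part_eq _ 1) in Ho by (simpl; lra).
      right; left. split; [lia|split].
      * rewrite xw_y. destruct (Rlt_dec (y j) (1 - alpha)); auto. lra.
      * rewrite (xw_at _ (F j + Z.of_nat cM) (y j + INR t * theta - alpha)).
        -- destruct (Rlt_dec _ _); auto. lra.
        -- exact Elast.
        -- lra.
Qed.


Lemma core n : (p < n)%nat -> (n - p + 1 <= (q - 1) * Q + (t - 1) * q)%nat ->
  abelian_period (blk xw p n) p.
Proof.
  intros Hpn HL.
  assert (Hp1 : (1 <= p)%nat) by (unfold p; nia).
  pose proof Rabs_theta_small as Hs1.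
  assert (HtI : 1 <= INR t) by (apply (le_INR 1); lia).
  assert (Hs2 : Rabs (INR t * theta) < alpha) by (rewrite Rabs_ttheta; lra).
  assert (Hfin : forall r, (r < p)%nat -> (r + p <= n)%nat ->
            (forall i, (r + i * p + p <= n)%nat -> Mp (p + r + i * p) = false) ->
            abelian_period (blk xw p n) p).
  { intros r Hr Hrn Hi. apply (assemble xw p cM n r); auto.
    - intros i Hii. apply notMp_maj. apply Hi. auto.
    - apply all_MM.
    - apply all_MM. }
  destruct (le_lt_dec (n - p + 1) p) as [Hsmall|Hbig].
  - destruct (Mp (p + 0)) eqn:E0.
    + destruct (Mp (p + 1)) eqn:E1.
      * exfalso. apply (Mb_consec (INR t * theta) p Hs2); auto.
        rewrite Nat.add_0_r in E0. exact E0.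
      * apply (Hfin 1%nat); [lia|lia|]. intros i Hi.
        destruct i; [rewrite Nat.add_0_r; simpl; exact E1|]. exfalso. nia.
    + apply (Hfin 0%nat); [lia|lia|]. intros i Hi.
      destruct i; [rewrite Nat.add_0_r; simpl; exact E0|]. exfalso. nia.
  - destruct (choose_r (fun j => Mp (p + j)) (fun j => Mq (p + j)) q t Q (n - p + 1)
       Hq Ht ltac:(lia)) as [r [Hr Hall]]; auto.
    + intros j j' H1 H2 Hlt. pose proof (sepq (p + j) (p + j') H1 H2 ltac:(lia)). lia.
    + intros j Hj. destruct (R1 (p + j) Hj) as [s [Hs Hm]]. exists s. split; auto.
      rewrite <- Nat.add_assoc in Hm. exact Hm.
    + apply (Hfin r); [exact Hr|lia|]. intros i Hi.
      rewrite <- Nat.add_assoc. apply Hall. fold p. lia.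
Qed.

End Rot.

Open Scope Z_scope.
Lemma int_case (u v q Q d : Z) : (1 <= q -> 0 < d < Q -> d = u * q + v * Q ->
  (v = 0 /\ 1 <= u) \/ (v < 0 /\ 1 <= u) \/ (0 < v /\ u <= -1))%Z.
Proof.
  intros Hq Hd E.
  destruct (Z.lt_trichotomy v 0) as [Hv|[Hv|Hv]].
  - right; left. split; auto.
    assert (v * Q <= - Q) by nia.
    destruct (Z.le_gt_cases u 0); [|lia].
    assert (u * q <= 0) by nia. lia.
  - left. subst v. split; auto.
    destruct (Z.le_gt_cases u 0); [|lia].
    assert (u * q <= 0) by nia. lia.
  - right; right. split; auto.
    assert (v * Q >= Q) by nia.
    destruct (Z.le_gt_cases u (-1)); [lia|].
    assert (u * q >= 0) by nia. lia.
Qed.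
Open Scope R_scope.



Section CF.
Variable alpha : R.
Hypothesis Ha : 0 < alpha < 1.
Hypothesis Hirr : irrational alpha.

Definition xg (j : nat) : R := Nat.iter j gauss alpha.

Fixpoint ppair (n : nat) : nat * nat :=
  match n with
  | O => (1%nat, 0%nat)
  | S j => let (pp, c) := ppair j in (c, (cf_digit alpha (S j) * c + pp)%nat)
  end.

Definition qm j := fst (qpair alpha j).
Definition qc j := snd (qpair alpha j).
Definition pm j := fst (ppair j).
Definition pc j := snd (ppair j).
Definition dg j := cf_digit alpha (S j).

Lemma qm_S j : qm (S j) = qc j.
Proof. unfold qm, qc. simpl. destruct (qpair alpha j). reflexivity. Qed.
Lemma qc_S j : qc (S j) = (dg j * qc j + qm j)%nat.
Proof. unfold qm, qc, dg. simpl. destruct (qpair alpha j). reflexivity. Qed.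
Lemma pm_S j : pm (S j) = pc j.
Proof. unfold pm, pc. simpl. destruct (ppair j). reflexivity. Qed.
Lemma pc_S j : pc (S j) = (dg j * pc j + pm j)%nat.
Proof. unfold pm, pc, dg. simpl. destruct (ppair j). reflexivity. Qed.

Lemma cf_q_qc j : cf_q alpha j = qc j.
Proof. reflexivity. Qed.

Definition th j := INR (qc j) * alpha - INR (pc j).
Definition thm j := INR (qm j) * alpha - INR (pm j).

Lemma xg_S j : xg (S j) = gauss (xg j).
Proof. reflexivity. Qed.

Lemma dg_INR j : 0 < xg j < 1 -> INR (dg j) = IZR (Int_part (/ xg j)) /\ 1 <= INR (dg j)
   /\ xg (S j) = / xg j - INR (dg j).
Proof.
  intros H. unfold dg, cf_digit.
  assert (Hi : 1 < / xg j).
  { rewrite <- Rinv_1. apply Rinv_lt_contravar; lra. }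
  destruct (base_Int_part (/ xg j)) as [A B].
  assert (Hz : (1 <= Int_part (/ xg j))%Z).
  { apply le_IZR. simpl. assert (IZR (Int_part (/ xg j)) > 0) by lra.
    apply lt_IZR in H0. apply IZR_le. lia. }
  fold (xg j).
  rewrite INR_IZR_INZ, Z2Nat.id by lia. split; [auto|split].
  - apply IZR_le in Hz. exact Hz.
  - rewrite xg_S. unfold gauss, frac_part. reflexivity.
Qed.

Lemma th_rec j : 0 < xg j < 1 -> th (S j) = INR (dg j) * th j + thm j.
Proof.
  intros H. unfold th, thm. rewrite qc_S, pc_S, !plus_INR, !mult_INR. ring.
Qed.

Lemma inv_step j : 0 < xg j < 1 -> th j = - xg j * thm j ->
  th (S j) = - xg (S j) * thm (S j).
Proof.
  intros H E. destruct (dg_INR j H) as [_ [_ Hx]].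
  unfold thm at 1. rewrite qm_S, pm_S. fold (th j).
  rewrite th_rec by auto. rewrite Hx.
  assert (thm j = - th j / xg j) by (rewrite E; field; lra).
  rewrite H0. field. lra.
Qed.

Lemma qc_pos_step j : 0 < xg j < 1 -> (1 <= qc j)%nat -> (1 <= qc (S j))%nat.
Proof.
  intros H Hq. destruct (dg_INR j H) as [_ [Hd _]].
  rewrite qc_S. assert (1 <= dg j)%nat by (apply INR_le; simpl; lra). nia.
Qed.

Lemma invariant : forall j, (0 < xg j < 1) /\ th j = - xg j * thm j /\ (1 <= qc j)%nat.
Proof.
  induction j as [|j [H1 [H2 H3]]].
  - unfold th, thm, xg, qc, qm, pc, pm. simpl. split; [lra|split; [lra|lia]].
  - assert (Hq : (1 <= qc (S j))%nat) by (apply qc_pos_step; auto).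
    assert (Ht : th (S j) = - xg (S j) * thm (S j)) by (apply inv_step; auto).
    split; [|split; auto].
    assert (Hb : 0 <= xg (S j) < 1).
    { rewrite xg_S. unfold gauss. destruct (base_fp (/ xg j)). lra. }
    split; [|lra].
    destruct (Rle_lt_or_eq_dec 0 (xg (S j))) as [|E]; [lra|auto|].
    exfalso. assert (Ht0 : th (S j) = 0) by (rewrite Ht, <- E; ring). clear Ht. rename Ht0 into Ht.
    unfold th in Ht. apply (Hirr (Z.of_nat (pc (S j))) (qc (S j))); [lia|].
    rewrite <- INR_IZR_INZ.
    assert (0 < INR (qc (S j))) by (apply lt_0_INR; lia).
    unfold Rdiv. apply (Rmult_eq_reg_r (INR (qc (S j)))); [|lra].
    rewrite Rmult_assoc, Rinv_l by lra. lra.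
Qed.

Lemma xg_pos j : 0 < xg j < 1.
Proof. apply invariant. Qed.

Lemma qc_pos j : (1 <= qc j)%nat.
Proof. apply invariant. Qed.

Lemma th_S j : th (S j) = - xg (S j) * th j.
Proof.
  destruct (invariant (S j)) as [_ [E _]]. unfold thm in E. rewrite qm_S, pm_S in E. exact E.
Qed.

Lemma th_nz j : th j <> 0.
Proof.
  induction j.
  - unfold th, qc, pc. simpl. lra.
  - rewrite th_S. pose proof (xg_pos (S j)). intro E.
    apply Rmult_integral in E. destruct E; [lra|auto].
Qed.

Lemma thm_rel j : thm j = - (INR (dg j) + xg (S j)) * th j.
Proof.
  pose proof (th_rec j (xg_pos j)). rewrite th_S in H. lra.
Qed.

Lemma abs_th_dec j : Rabs (th (S j)) <= Rabs (th j).
Proof.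
  rewrite th_S, Rabs_mult, Rabs_Ropp. pose proof (xg_pos (S j)).
  rewrite (Rabs_right (xg (S j))) by lra. pose proof (Rabs_pos (th j)). nra.
Qed.

Lemma abs_th_le0 j : Rabs (th j) <= alpha.
Proof.
  induction j.
  - unfold th, qc, pc. simpl. rewrite Rabs_right; lra.
  - pose proof (abs_th_dec j). lra.
Qed.

Lemma t_small k t : (1 <= k)%nat -> (t <= dg k)%nat -> INR t * Rabs (th k) < alpha.
Proof.
  intros Hk Ht. destruct k as [|k']; [lia|].
  pose proof (thm_rel (S k')) as E. unfold thm in E. rewrite qm_S, pm_S in E. fold (th k') in E.
  pose proof (abs_th_le0 k').
  assert (Rabs (th k') = (INR (dg (S k')) + xg (S (S k'))) * Rabs (th (S k'))).
  { rewrite E, Rabs_mult, Rabs_Ropp. pose proof (xg_pos (S (S k'))). pose proof (pos_INR (dg (S k'))).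
    rewrite (Rabs_right (_ + _)) by lra. auto. }
  pose proof (xg_pos (S (S k'))). apply le_INR in Ht.
  pose proof (th_nz (S k')). pose proof (Rabs_pos_lt _ H2). nra.
Qed.

Lemma alpha_half : (2 <= cf_digit alpha 1)%nat -> alpha < 1/2.
Proof.
  intros H. pose proof (dg_INR 0 (xg_pos 0)) as [E _]. unfold dg in E.
  apply le_INR in H. rewrite E in H. simpl in H.
  destruct (base_Int_part (/ xg 0)) as [A _]. unfold xg in A. simpl in A.
  assert (2 <= / alpha) by lra.
  assert (alpha <= 1/2).
  { assert (alpha * 2 <= alpha * / alpha) by (apply Rmult_le_compat_l; lra).
    rewrite Rinv_r in H1 by lra. lra. }
  destruct (Rle_lt_or_eq_dec _ _ H1); auto.
  exfalso. apply (Hirr 1%Z 2%nat); [lia|]. simpl. lra.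
Qed.

Definition D j : Z := (Z.of_nat (qc j) * Z.of_nat (pm j) - Z.of_nat (qm j) * Z.of_nat (pc j))%Z.

Lemma D_pm1 j : D j = 1%Z \/ D j = (-1)%Z.
Proof.
  induction j.
  - left. reflexivity.
  - unfold D in *. rewrite qc_S, pc_S, qm_S, pm_S. rewrite !Nat2Z.inj_add, !Nat2Z.inj_mul.
    destruct IHj; [right|left]; lia.
Qed.

Lemma best_approx k (d : nat) (P : Z) : (0 < d < qc (S k))%nat ->
  Rabs (th k) <= Rabs (INR d * alpha - IZR P).
Proof.
  intros Hd.
  set (s := D (S k)).
  set (q := Z.of_nat (qc k)). set (Q := Z.of_nat (qc (S k))).
  set (p0 := Z.of_nat (pc k)). set (p1 := Z.of_nat (pc (S k))).
  assert (Hs : s = (Q * p0 - q * p1)%Z).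
  { unfold s, D, Q, p0, q, p1. rewrite qm_S, pm_S. lia. }
  assert (Hs2 : (s * s = 1)%Z) by (destruct (D_pm1 (S k)) as [E|E]; unfold s; rewrite E; lia).
  set (u := (s * (P * Q - Z.of_nat d * p1))%Z).
  set (v := (s * (Z.of_nat d * p0 - P * q))%Z).
  assert (E1 : Z.of_nat d = (u * q + v * Q)%Z).
  { assert (u * q + v * Q = Z.of_nat d * (s * s))%Z by (unfold u, v; rewrite Hs; ring). rewrite Hs2 in H. lia. }
  assert (E2 : P = (u * p0 + v * p1)%Z).
  { assert (u * p0 + v * p1 = P * (s * s))%Z by (unfold u, v; rewrite Hs; ring). rewrite Hs2 in H. lia. }
  assert (Hq : (1 <= q)%Z) by (unfold q; pose proof (qc_pos k); lia).
  assert (HR2 : INR d * alpha - IZR P = IZR u * th k + IZR v * th (S k)).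
  { rewrite INR_IZR_INZ, E1, E2. unfold th. rewrite !INR_IZR_INZ. fold q Q p0 p1.
    rewrite !plus_IZR, !mult_IZR. ring. }
  rewrite HR2, th_S.
  replace (IZR u * th k + IZR v * (- xg (S k) * th k)) with (th k * (IZR u - IZR v * xg (S k))) by ring.
  rewrite Rabs_mult.
  assert (Hx := xg_pos (S k)).
  assert (1 <= Rabs (IZR u - IZR v * xg (S k))).
  { assert (HQ : (0 < Z.of_nat d < Q)%Z) by (unfold Q; lia).
    clearbody u v.
    destruct (int_case u v q Q (Z.of_nat d) Hq HQ E1) as [[Hv Hu]|[[Hv Hu]|[Hv Hu]]].
    - subst v. apply IZR_le in Hu. rewrite Rmult_0_l, Rminus_0_r, Rabs_right; simpl in *; lra.
    - apply IZR_le in Hu. apply IZR_lt in Hv. assert (IZR v * xg (S k) < 0) by nra.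
      rewrite Rabs_right; simpl in *; lra.
    - apply IZR_le in Hu. apply IZR_lt in Hv. assert (IZR v * xg (S k) > 0) by nra.
      rewrite Rabs_left; simpl in *; lra. }
  pose proof (Rabs_pos (th k)). nra.
Qed.

End CF.

Open Scope R_scope.

Definition pb (alpha z : R) : R :=
  if Req_EM_T (frac_part z) 0 then alpha
  else if Rle_dec (frac_part z) (1 - alpha) then frac_part z else frac_part z - (1 - alpha).

Lemma pb_pos alpha z : 0 < alpha < 1 -> 0 < pb alpha z.
Proof.
  intros H. unfold pb. destruct (base_fp z).
  destruct (Req_EM_T _ _); [lra|]. destruct (Rle_dec _ _); lra.
Qed.

Lemma pb_ok alpha z eps : 0 < alpha < 1 -> 0 < eps <= pb alpha z ->
  sletter true alpha z = sletter false alpha (z - eps).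
Proof.
  intros Ha He. unfold pb in He. unfold sletter.
  pose proof (base_fp z) as Hb. pose proof (Rplus_Int_part_frac_part z) as Ez.
  destruct (Req_EM_T (frac_part z) 0) as [E0|E0].
  - assert (frac_part (z - eps) = 1 - eps).
    { replace (z - eps) with (IZR (Int_part z - 1) + (1 - eps)).
      - apply frac_of. lra.
      - rewrite minus_IZR. lra. }
    rewrite H. destruct (Rlt_dec 0 (frac_part z)); [lra|].
    destruct (Rlt_dec (1 - eps) (1 - alpha)); [lra|auto].
  - assert (frac_part (z - eps) = frac_part z - eps \/ frac_part z = eps).
    { destruct (Rle_lt_or_eq_dec eps (frac_part z)).
      - destruct (Rle_dec (frac_part z) (1 - alpha)); lra.
      - left. replace (z - eps) with (IZR (Int_part z) + (frac_part z - eps)) by lra.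
        apply frac_of. lra.
      - right; auto. }
    destruct (Rlt_dec 0 (frac_part z)); [|lra].
    destruct (Rle_dec (frac_part z) (1 - alpha)).
    + destruct H as [H|H].
      * rewrite H. destruct (Rlt_dec _ _); [auto|lra].
      * replace (z - eps) with (IZR (Int_part z) + 0) by lra. rewrite frac_of by lra.
        destruct (Rlt_dec _ _); [auto|lra].
    + destruct H as [H|H]; [|lra].
      rewrite H. destruct (Rlt_dec _ _); [lra|auto].
Qed.

Lemma pert_min alpha (f : nat -> R) M : 0 < alpha < 1 ->
  exists eps, 0 < eps /\ forall i, (i < M)%nat -> eps <= pb alpha (f i).
Proof.
  intros Ha. induction M.
  - exists 1. split; [lra|]. intros; lia.
  - destruct IHM as [e [He H]].
    exists (Rmin e (pb alpha (f M))). split.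
    + apply Rmin_glb_lt; auto. apply pb_pos; auto.
    + intros i Hi. destruct (Nat.eq_dec i M).
      * subst. apply Rmin_r.
      * eapply Rle_trans; [apply Rmin_l|]. apply H. lia.
Qed.

Lemma pert alpha (f : nat -> R) M : 0 < alpha < 1 ->
  exists eps, forall i, (i < M)%nat -> sletter true alpha (f i) = sletter false alpha (f i - eps).
Proof.
  intros Ha. destruct (pert_min alpha f M Ha) as [e [He H]]. exists e.
  intros i Hi. apply pb_ok; auto.
Qed.

Lemma nth_blk x j L i : (i < L)%nat -> nth i (blk x j L) false = x (j + i)%nat.
Proof.
  intros H. unfold blk.
  rewrite nth_indep with (d' := x 0%nat) by (rewrite length_map, length_seq; auto).
  rewrite map_nth, seq_nth by auto. reflexivity.
Qed.

Lemma word_rep alpha w p : 0 < alpha < 1 -> factor_of_slope alpha w ->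
  exists beta, w = blk (xw alpha beta) p (length w).
Proof.
  intros Ha [rho [c [n0 [Hr Hw]]]].
  assert (Hgen : forall eps, (forall i, (i < length w)%nat ->
            sletter c alpha (rho + INR (n0 + i) * alpha) = sletter false alpha (rho + INR (n0 + i) * alpha - eps)) ->
          exists beta, w = blk (xw alpha beta) p (length w)).
  { intros eps He. exists (rho + INR n0 * alpha - eps - INR p * alpha).
    apply nth_ext with (d := false) (d' := false).
    - rewrite blk_len. auto.
    - intros i Hi. rewrite nth_blk by auto. rewrite Hw by auto. unfold sturmian, xw.
      rewrite He by auto. f_equal. rewrite !plus_INR. ring. }
  destruct c.
  - destruct (pert alpha (fun i => rho + INR (n0 + i) * alpha) (length w) Ha) as [eps He].
    apply (Hgen eps). intros i Hi. apply He; auto.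
  - apply (Hgen 0). intros i Hi. f_equal. ring.
Qed.

Lemma contained_len u P m : parikh_contained (parikh u) P -> (fst P + snd P = m)%nat -> (length u < m)%nat.
Proof.
  intros [H1 [H2 H3]] Hm. pose proof (count_ft u). unfold parikh in *. simpl in *.
  destruct (Nat.eq_dec (length u) m); [|lia].
  exfalso. apply H3. destruct P as [a b]. simpl in *. f_equal; lia.
Qed.

Lemma concat_len (mids : list (list bool)) m P :
  (forall u, In u mids -> parikh u = P /\ length u = m) -> length (concat mids) = (length mids * m)%nat.
Proof.
  induction mids as [|u l IH]; intros H; simpl; auto.
  rewrite length_app, IH by (intros; apply H; right; auto).
  destruct (H u (or_introl eq_refl)) as [_ ->]. lia.
Qed.

Open Scope R_scope.
Theorem proposition4p2 (alpha : R) (w : list bool) (m k t E : nat) :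
  0 < alpha < 1 ->
  irrational alpha ->
  (2 <= cf_digit alpha 1)%nat ->
  factor_of_slope alpha w ->
  w <> nil ->
  min_abelian_period w m ->
  (cf_q alpha k <= m)%nat ->
  (forall j : nat, (cf_q alpha j <= m)%nat -> (j <= k)%nat) ->
  (1 <= t)%nat -> (t <= cf_digit alpha (S k))%nat -> (t * cf_q alpha k <= m)%nat ->
  (forall t' : nat, (1 <= t')%nat -> (t' <= cf_digit alpha (S k))%nat ->
      (t' * cf_q alpha k <= m)%nat -> (t' <= t)%nat) ->
  ~ in_M alpha m ->
  is_ab alpha m E ->
  ((Z.of_nat (cf_q alpha (S k)) + 2 * Z.of_nat t - 1) * Z.of_nat (cf_q alpha k)
      - Z.of_nat (cf_q alpha (S k)) <= Z.of_nat (length w))%Z /\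
  ((Z.of_nat (cf_q alpha (S k)) + 2 * Z.of_nat t - 1) * Z.of_nat (cf_q alpha k)
      - Z.of_nat (cf_q alpha (S k)) <= (Z.of_nat E + 2) * Z.of_nat m - 2)%Z.
Proof.
  intros Ha Hirr Ha1 Hfac Hne [Hap Hmin] Hqk Hkmax Ht1 Htk Htq Htmax HnM Hab.
  pose proof Hap as Hap'.
  destruct Hap' as [u0 [un [mids [P [Ew [Hmn [Hmid [Hc0 Hcn]]]]]]]].
  assert (HP : (fst P + snd P = m)%nat).
  { destruct mids as [|u l]; [congruence|]. destruct (Hmid u (or_introl eq_refl)) as [Hu1 Hu2].
    pose proof (count_ft u). unfold parikh in Hu1. rewrite <- Hu1. simpl. lia. }
  pose proof (contained_len u0 P m Hc0 HP) as Hl0.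
  pose proof (contained_len un P m Hcn HP) as Hln.
  pose proof (concat_len mids m P Hmid) as Hcl.
  set (e := length mids) in *.
  assert (He1 : (1 <= e)%nat) by (unfold e; destruct mids; [congruence|simpl; lia]).
  assert (Hn : length w = (length u0 + e * m + length un)%nat).
  { rewrite Ew, !length_app, Hcl. lia. }
  assert (HeE : (e <= E)%nat).
  { destruct Hab as [_ Hab]. apply (Hab (concat mids)).
    - destruct Hfac as [rho [c [n0 [Hr Hw]]]].
      exists rho, c, (n0 + length u0)%nat. split; auto.
      intros i Hi.
      assert (nth i (concat mids) false = nth (length u0 + i) w false).
      { rewrite Ew. rewrite app_nth2 by lia. replace (length u0 + i - length u0)%nat with i by lia.
        rewrite app_nth1 by auto. auto. }
      rewrite H, Hw by (rewrite Hn; lia). f_equal. lia.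
    - exists mids. split; [auto|split; [auto|split]].
      + intros u Hu. apply Hmid; auto.
      + intros u u' Hu Hu'. rewrite (proj1 (Hmid u Hu)), (proj1 (Hmid u' Hu')). auto. }
  destruct k as [|k'].
  { exfalso. change (cf_q alpha 0) with 1%nat in *.
    assert (HQ1 : cf_q alpha 1 = cf_digit alpha 1) by (unfold cf_q; simpl; lia).
    assert (Hm1 : (m < cf_digit alpha 1)%nat).
    { destruct (le_lt_dec (cf_digit alpha 1) m); auto. specialize (Hkmax 1%nat ltac:(lia)). lia. }
    specialize (Htmax m ltac:(lia) ltac:(lia) ltac:(lia)).
    apply HnM. exists 0%nat, t. split; auto. split; auto. change (cf_q alpha 0) with 1%nat. lia. }
  set (k := S k') in *.
  set (q := cf_q alpha k) in *. set (Q := cf_q alpha (S k)) in *.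
  assert (Hpm : (t * q < m)%nat).
  { destruct (Nat.eq_dec (t * q) m); [|lia]. exfalso. apply HnM. exists k, t. auto. }
  assert (Hq1 : (1 <= q)%nat) by apply (qc_pos alpha Ha Hirr).
  assert (HtQ : (t * q < Q)%nat).
  { unfold Q, q. change (cf_q alpha (S k)) with (qc alpha (S k)). change (cf_q alpha k) with (qc alpha k).
    rewrite qc_S. unfold k. rewrite qm_S. pose proof (qc_pos alpha Ha Hirr k').
    change (cf_digit alpha (S (S k'))) with (dg alpha (S k')) in Htk. fold k in Htk |- *.
    assert (t * qc alpha k <= dg alpha k * qc alpha k)%nat by (apply Nat.mul_le_mono_r; exact Htk). lia. }
  assert (Claim1 : ((Z.of_nat Q + 2 * Z.of_nat t - 1) * Z.of_nat q - Z.of_nat Q <= Z.of_nat (length w))%Z).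
  { destruct (Z.le_gt_cases ((Z.of_nat Q + 2 * Z.of_nat t - 1) * Z.of_nat q - Z.of_nat Q) (Z.of_nat (length w)))
      as [|Hlt]; auto. exfalso.
    set (n := length w) in *.
    assert (HL : (n - t * q + 1 <= (q - 1) * Q + (t - 1) * q)%nat).
    { assert (Hlt2 : (Z.of_nat n + Z.of_nat Q + 1 <= (Z.of_nat Q + 2 * Z.of_nat t - 1) * Z.of_nat q)%Z) by lia.
      assert (Hmn2 : (m <= e * m)%nat) by nia.
      assert (Hnp : (t * q < n)%nat) by lia.
      clearbody q Q n. clear -Hlt2 Hq1 Ht1 Hnp.
      destruct q as [|q0]; [lia|]. destruct t as [|t0]; [lia|].
      replace (S q0 - 1)%nat with q0 by lia. replace (S t0 - 1)%nat with t0 by lia.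
      rewrite !Nat2Z.inj_succ in Hlt2.
      assert (H3 : (n + 1 <= q0 * Q + t0 * S q0 + S t0 * S q0)%nat).
      { apply Nat2Z.inj_le. rewrite !Nat2Z.inj_add, !Nat2Z.inj_mul, !Nat2Z.inj_succ. nia. }
      remember (S t0 * S q0)%nat as A. remember (q0 * Q + t0 * S q0)%nat as B.
      clear -H3 Hnp. lia. }
    destruct (word_rep alpha w (t * q) Ha Hfac) as [beta Hb].
    assert (Hpn : (t * q < n)%nat) by (assert (m <= e * m)%nat by nia; lia).
    pose proof (core alpha beta (proj1 Ha) (alpha_half alpha Ha Hirr Ha1) q (pc alpha k) t Q (th alpha k)
      Hq1 Ht1 HtQ ltac:(unfold th, q; change (cf_q alpha k) with (qc alpha k); ring)
      (t_small alpha Ha Hirr k t ltac:(unfold k; lia) Htk)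
      (fun d P H => best_approx alpha Ha Hirr k d P H) n Hpn HL) as Hab2.
    fold n in Hb. rewrite <- Hb in Hab2.
    specialize (Hmin _ Hab2). lia. }
  split; [exact Claim1|].
  assert (Z.of_nat (length w) <= (Z.of_nat E + 2) * Z.of_nat m - 2)%Z.
  { rewrite Hn. assert (Z.of_nat e <= Z.of_nat E)%Z by lia. nia. }
  lia.
Qed.
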